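(* Let $(E,\|\cdot\|)$ be an $n$-dimensional normed space over $K$ such that for each subspace $F\subseteq E$ with $\dim E/F=2$ one has $\dim_{K^\vee}(E/F)^\vee=1$. Then all $(n-1)$-dimensional subspaces of $E$ are isometrically isomorphic to each other.
   Context: $K$ is a complete non-archimedean non-trivially valued field which is not spherically complete; $K^\vee$ is a fixed spherically complete immediate extension of $K$. Normed spaces are finite-dimensional non-archimedean normed spaces over $K$; quotients carry the quotient norm $\|\pi(x)\|=\inf_{d\in F}\|x-d\|$. A subset $X\subseteq E\setminus\{0\}$ is orthogonal if $\|\sum\lambda_ix_i\|=\max\|\lambda_ix_i\|$ for finitely many distinct $x_i\in X$, $\lambda_i\in K$; $\dim_{K^\vee}E^\vee$ denotes the cardinality of a maximal orthogonal subset of $E$. *)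

(* Defs.v *)
From HB Require Import structures.
From mathcomp Require Import all_boot all_order all_algebra.
From mathcomp Require Import classical_sets boolp reals.
Set Implicit Arguments. Unset Strict Implicit. Unset Printing Implicit Defensive.
Import Order.TTheory GRing.Theory Num.Theory.
Local Open Scope ring_scope.
Local Open Scope classical_set_scope.

Definition nonarch_abs (R : realType) (K : fieldType) (abs : K -> R) : Prop :=
  [/\ forall x, (abs x == 0) = (x == 0),
      forall x, 0 <= abs x,
      forall x y, abs (x * y) = abs x * abs y
    & forall x y, abs (x + y) <= Num.max (abs x) (abs y)].

Definition nontrivial_abs (R : realType) (K : fieldType) (abs : K -> R) : Prop :=
  exists x, abs x != 0 /\ abs x != 1.

Definition complete_abs (R : realType) (K : fieldType) (abs : K -> R) : Prop :=
  forall u : nat -> K,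
    (forall e : R, 0 < e -> exists N, forall m k, (N <= m)%N -> (N <= k)%N ->
        abs (u m - u k) < e) ->
    exists l, forall e : R, 0 < e -> exists N, forall m, (N <= m)%N -> abs (u m - l) < e.

Definition cball (R : realType) (K : fieldType) (abs : K -> R) (p : K * R) : set K :=
  [set x | abs (x - p.1) <= p.2].

Definition spherically_complete (R : realType) (K : fieldType) (abs : K -> R) : Prop :=
  forall S : set (K * R), S !=set0 ->
    (forall p, S p -> 0 < p.2) ->
    (forall p q, S p -> S q -> cball abs p `<=` cball abs q \/ cball abs q `<=` cball abs p) ->
    exists x, forall p, S p -> cball abs p x.

Definition nonarch_norm (R : realType) (K : fieldType) (abs : K -> R)
    (E : lmodType K) (norm : E -> R) : Prop :=
  [/\ forall x, (norm x == 0) = (x == 0),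
      forall x, 0 <= norm x,
      forall a x, norm (a *: x) = abs a * norm x
    & forall x y, norm (x + y) <= Num.max (norm x) (norm y)].

(* Quotient norm on E/F, evaluated on a representative x: inf_{d in F} ||x - d||. *)
Definition qnorm (R : realType) (K : fieldType) (E : vectType K) (norm : E -> R)
    (F : {vspace E}) (x : E) : R :=
  inf [set norm (x - d) | d in [set d : E | d \in F]].

(* The classes in E/F of the (representatives in the) sequence s form an
   orthogonal subset of E/F: the classes are nonzero, pairwise distinct, and
   ||sum lam_i pi(s_i)|| = max ||lam_i pi(s_i)|| for all scalars lam
   (taking lam_i = 0 covers every finite subfamily). *)
Definition quot_orthogonal (R : realType) (K : fieldType) (E : vectType K)
    (norm : E -> R) (F : {vspace E}) (s : seq E) : Prop :=
  [/\ forall i, (i < size s)%N -> s`_i \notin F,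
      forall i j, (i < size s)%N -> (j < size s)%N -> i != j -> s`_i - s`_j \notin F
    & forall lam : nat -> K,
        qnorm norm F (\sum_(i < size s) lam i *: s`_i)
        = \big[Num.max/0]_(i < size s) qnorm norm F (lam i *: s`_i)].

(* dim_{K^vee} (E/F)^vee = d : there is a maximal orthogonal subset of E/F
   of cardinality d (maximal: no further class can be added). *)
Definition quot_dual_dim (R : realType) (K : fieldType) (E : vectType K)
    (norm : E -> R) (F : {vspace E}) (d : nat) : Prop :=
  exists s : seq E,
    [/\ quot_orthogonal norm F s, size s = d
      & forall y, y \notin F -> (forall i, (i < size s)%N -> y - s`_i \notin F) ->
          ~ quot_orthogonal norm F (rcons s y)].

Definition isometric_subspaces (R : realType) (K : fieldType) (E : vectType K)
    (norm : E -> R) (F1 F2 : {vspace E}) : Prop :=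
  exists f : E -> E,
    [/\ forall a x y, x \in F1 -> y \in F1 -> f (a *: x + y) = a *: f x + f y,
        forall x, x \in F1 -> f x \in F2,
        forall x, x \in F1 -> norm (f x) = norm x
      & forall y, y \in F2 -> exists2 x, x \in F1 & f x = y].

(* Main.v *)
Require Import Defs.
From HB Require Import structures.
From mathcomp Require Import all_boot all_order all_algebra.
From mathcomp Require Import classical_sets boolp reals.
Import Order.TTheory GRing.Theory Num.Theory.
Local Open Scope ring_scope.
Local Open Scope classical_set_scope.

Section Helpers.
Variables (R : realType) (K : fieldType) (abs : K -> R).
Hypothesis habs : nonarch_abs abs.
Variables (E : vectType K) (norm : E -> R).
Hypothesis hnorm : nonarch_norm abs norm.

Lemma abs1 : abs 1 = 1.
Proof.
case: habs => h0 _ hM _.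
have : abs 1 * abs 1 = 1 * abs 1 by rewrite -hM !mul1r.
by move/mulIf; apply; rewrite h0 oner_eq0.
Qed.

Lemma absN1 : abs (-1) = 1.
Proof.
case: habs => h0 hp hM _.
have h : abs (-1) ^+ 2 = 1 by rewrite expr2 -hM mulrNN mul1r abs1.
move/eqP: h; rewrite sqrf_eq1 => /orP[/eqP//|/eqP h].
by move: (hp (-1)); rewrite h ler0N1.
Qed.

Lemma normN x : norm (- x) = norm x.
Proof. by case: hnorm => _ _ hZ _; rewrite -scaleN1r hZ absN1 mul1r. Qed.

Lemma normBC x y : norm (x - y) = norm (y - x).
Proof. by rewrite -normN opprB. Qed.

Lemma norm0 : norm 0 = 0.
Proof. by case: hnorm => h _ _ _; apply/eqP; rewrite h. Qed.

Lemma norm_ge0 x : 0 <= norm x.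
Proof. by case: hnorm. Qed.

Lemma normU x y : norm (x + y) <= Num.max (norm x) (norm y).
Proof. by case: hnorm. Qed.

Lemma normZ a x : norm (a *: x) = abs a * norm x.
Proof. by case: hnorm. Qed.

Lemma norm_dom x y : norm y < norm x -> norm (x + y) = norm x.
Proof.
move=> hyx; apply/eqP; rewrite eq_le; apply/andP; split.
  by apply: le_trans (normU x y) _; rewrite ge_max lexx ltW.
have := normU (x + y) (- y); rewrite addrK normN le_max => /orP[//|h].
by move: (lt_le_trans hyx h); rewrite ltxx.
Qed.

Variable F : {vspace E}.

Definition qset (v : E) := [set norm (v - d) | d in [set d : E | d \in F]].

Lemma qset0 v : qset v !=set0.
Proof. by exists (norm (v - 0)); exists 0 => //=; rewrite mem0v. Qed.

Lemma qset_lb v : has_lbound (qset v).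
Proof. by exists 0 => _ [d _ <-]; apply: norm_ge0. Qed.

Lemma qnorm_le v f : f \in F -> qnorm norm F v <= norm (v - f).
Proof. by move=> hf; apply: (ge_inf (qset_lb v)); exists f. Qed.

Lemma qnorm_ge0 v : 0 <= qnorm norm F v.
Proof. by apply: lb_le_inf; [apply: qset0| move=> _ [d _ <-]; apply: norm_ge0]. Qed.

Lemma qnorm_lt v x : qnorm norm F v < x -> exists2 f, f \in F & norm (v - f) < x.
Proof. by move/(inf_lt (qset0 v)) => [_ [d hd <-] h]; exists d. Qed.

Lemma qnorm_geP v x : (forall f, f \in F -> x <= norm (v - f)) -> x <= qnorm norm F v.
Proof. by move=> h; apply: lb_le_inf; [apply: qset0| move=> _ [d hd <-]; apply: h]. Qed.

Lemma qnormU v w : qnorm norm F (v + w) <= Num.max (qnorm norm F v) (qnorm norm F w).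
Proof.
rewrite leNgt; apply/negP; rewrite gt_max => /andP[h1 h2].
have [f1 hf1 n1] := qnorm_lt _ _ h1.
have [f2 hf2 n2] := qnorm_lt _ _ h2.
have := qnorm_le (v + w) _ (rpredD hf1 hf2).
have -> : v + w - (f1 + f2) = (v - f1) + (w - f2) by rewrite opprD addrACA.
move=> h; have := le_trans h (normU _ _).
by rewrite leNgt gt_max n1 n2.
Qed.


Definition goodA (s x : E) := forall d, d \in (F + <[x]>)%VS ->
  exists2 f, f \in F & norm (s - f) <= norm (s - d).

Lemma qnorm_geZ s x : goodA s x -> forall a b,
  qnorm norm F (a *: s) <= qnorm norm F (a *: s + b *: x).
Proof.
move=> hA a b; have [->|a0] := eqVneq a 0.
  rewrite scale0r; apply: le_trans (qnorm_ge0 _).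
  by apply: le_trans (qnorm_le 0 0 (mem0v F)) _; rewrite subr0 norm0.
apply: qnorm_geP => f hf.
set d := a^-1 *: (f - b *: x).
have hd : d \in (F + <[x]>)%VS.
  rewrite /d scalerBr; apply: memv_add; first exact: memvZ.
  by rewrite rpredN; apply: memvZ; apply: memvZ; apply: memv_line.
have [f' hf' hle] := hA d hd.
have -> : a *: s + b *: x - f = a *: (s - d).
  by rewrite /d scalerBr scalerA mulfV // scale1r opprB addrA addrAC.
apply: le_trans (qnorm_le _ (a *: f') (memvZ _ hf')) _.
rewrite -scalerBr !normZ; apply: ler_wpM2l => //.
by case: habs.
Qed.

Lemma orth_of s x : s \notin F -> x \notin F -> x - s \notin F ->
  goodA s x -> goodA x s -> quot_orthogonal norm F [:: s; x].
Proof.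
move=> hs hx hxs A1 A2; split.
- by case=> [|[|]].
- case=> [|[|]] [|[|]] //= _ _ _.
  by rewrite -opprB rpredN.
move=> lam; rewrite !big_ord_recl !big_ord0 /= addr0.
rewrite (@max_l _ _ _ 0) ?qnorm_ge0 //.
apply/eqP; rewrite eq_le qnormU ge_max qnorm_geZ //= addrC qnorm_geZ //.
Qed.

Lemma abs_ge0 c : 0 <= abs c.
Proof. by case: habs. Qed.

Lemma lemK s x : s \notin F -> x \notin F -> x - s \notin F ->
  ~ quot_orthogonal norm F [:: s; x] ->
  exists2 d, d \in (F + <[x]>)%VS & forall f, f \in F -> norm (s - d) < norm (s - f).
Proof.
move=> hs hx hxs hno; apply: contrapT => hne.
have A1 : goodA s x.
  move=> d hd; apply: contrapT => H; apply: hne; exists d => // f hf.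
  by rewrite ltNge; apply/negP => hle; apply: H; exists f.
apply: hno; apply: orth_of => //.
move=> e he; apply: contrapT => H.
have H' : forall f, f \in F -> norm (x - e) < norm (x - f).
  by move=> f hf; rewrite ltNge; apply/negP => hle; apply: H; exists f.
have [g hg [z /vlineP [c ->] ee]] := memv_addP he.
have [c0|c0] := eqVneq c 0.
  by move: (H' g hg); rewrite ee c0 scale0r addr0 ltxx.
set d := c^-1 *: (x - g).
have hd : d \in (F + <[x]>)%VS.
  rewrite /d scalerBr addrC; apply: memv_add; first by rewrite rpredN memvZ.
  by apply: memvZ; apply: memv_line.
have [f hf hle] := A1 d hd.
set X := x - (g + c *: f).
set Y := c *: s - x + g.
have hXY : X + Y = c *: (s - f).
  rewrite /X /Y scalerBr.
  rewrite [c *: s - x + g]addrAC [c *: s + g - x]addrC addrA.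
  by rewrite [x - (g + c *: f) - x]addrAC subrr add0r opprD addrC addrA addrK.
have hY : norm Y = norm (x - e).
  by rewrite ee /Y -normN; congr norm; rewrite opprD opprB opprD addrA addrAC.
have hX : norm Y < norm X by rewrite hY /X; apply: H'; apply: rpredD => //; apply: memvZ.
have hYd : Y = c *: (s - d).
  by rewrite /Y /d scalerBr scalerA mulfV // scale1r opprB addrA [in RHS]addrAC.
have := norm_dom _ _ hX; rewrite hXY normZ.
move: hX; rewrite hYd normZ => hX h.
have : abs c * norm (s - f) <= abs c * norm (s - d) by apply: ler_wpM2l => //; apply: abs_ge0.
by rewrite h leNgt hX.
Qed.


Lemma near_sym u d : (forall f, f \in F -> norm (u - d) < norm (u - f)) ->
  forall f, f \in F -> norm (d - u) < norm (d - f).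
Proof.
move=> h f hf.
have -> : d - f = (u - f) + (d - u) by rewrite [in RHS]addrC addrA subrK.
have hdu : norm (d - u) < norm (u - f) by rewrite normBC h.
by rewrite (norm_dom _ _ hdu).
Qed.

Lemma iso_line u d : (forall f, f \in F -> norm (u - d) < norm (u - f)) ->
  isometric_subspaces norm (F + <[u]>)%VS (F + <[d]>)%VS.
Proof.
move=> h.
have hu : u \notin F.
  by apply/negP => hu; move: (h u hu); rewrite subrr norm0 ltNge norm_ge0.
pose cf x := xget 0 [set a : K | x - a *: u \in F].
have P x : x \in (F + <[u]>)%VS -> x - cf x *: u \in F.
  move=> /memv_addP [g hg [z /vlineP [a ->] ->]].
  apply: (@xgetPex _ 0 [set a : K | _ - a *: u \in F]); exists a => /=.
  by rewrite addrK.
have U x a b : x - a *: u \in F -> x - b *: u \in F -> a = b.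
  move=> ha hb; apply/eqP; apply: contraNT hu => hab.
  have : (x - b *: u) - (x - a *: u) \in F by apply: rpredB.
  rewrite opprB [_ + (a *: u - x)]addrC addrA subrK -scalerBl => hm.
  have := memvZ ((a - b)^-1) hm.
  by rewrite scalerA mulVf ?scale1r // subr_eq0.
pose f x := x + cf x *: (d - u).
exists f; split.
- move=> a x y hx hy.
  have hxy : a *: x + y \in (F + <[u]>)%VS by rewrite rpredD // memvZ.
  rewrite /f.
  have -> : cf (a *: x + y) = a * cf x + cf y.
    apply: (U (a *: x + y)); first exact: P.
    have -> : a *: x + y - (a * cf x + cf y) *: u
       = a *: (x - cf x *: u) + (y - cf y *: u).
      by rewrite scalerDl -scalerA scalerBr opprD addrACA.
    by rewrite rpredD // ?memvZ // P.
  by rewrite scalerDl -scalerA [a *: (x + _)]scalerDr addrACA.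
- move=> x hx; rewrite /f.
  have -> : x + cf x *: (d - u) = (x - cf x *: u) + cf x *: d.
    by rewrite scalerBr addrA addrAC.
  by apply: memv_add; [apply: P | apply: memvZ; apply: memv_line].
- move=> x hx; rewrite /f.
  have [c0|c0] := eqVneq (cf x) 0; first by rewrite c0 scale0r addr0.
  set g := x - cf x *: u.
  have hg : g \in F by apply: P.
  have xe : x = cf x *: (u - (- (cf x)^-1 *: g)).
    by rewrite scalerBr scalerA mulrN mulfV // scaleN1r opprK /g [RHS]addrC subrK.
  apply: norm_dom.
  rewrite normZ [in X in _ < X]xe normZ normBC ltr_pM2l.
    by apply: h; rewrite memvZ.
  by rewrite lt_neqAle abs_ge0 andbT eq_sym; case: habs => h0 _ _ _; rewrite h0.
- move=> y /memv_addP [g hg [z /vlineP [b ->] ->]].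
  exists (g + b *: u); first by apply: memv_add => //; apply: memvZ; apply: memv_line.
  rewrite /f; have -> : cf (g + b *: u) = b.
    apply: (U (g + b *: u)); first by apply: P; apply: memv_add => //; apply: memvZ; apply: memv_line.
    by rewrite addrK.
  by rewrite scalerBr [b *: d - _]addrC addrA addrK.
Qed.

End Helpers.

Lemma iso_refl (R : realType) (K : fieldType) (E : vectType K) (norm : E -> R)
  (F1 : {vspace E}) : isometric_subspaces norm F1 F1.
Proof. by exists id; split => // y hy; exists y. Qed.

Lemma iso_trans (R : realType) (K : fieldType) (E : vectType K) (norm : E -> R)
  (A B C : {vspace E}) : isometric_subspaces norm A B -> isometric_subspaces norm B C ->
  isometric_subspaces norm A C.
Proof.
move=> [f [fl fm fn fs]] [g [gl gm gn gs]]; exists (g \o f); split => /=.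
- by move=> a x y hx hy; rewrite fl // gl // fm.
- by move=> x hx; apply: gm; apply: fm.
- by move=> x hx; rewrite gn ?fn // fm.
- move=> z hz; have [y hy <-] := gs z hz; have [x hx <-] := fs y hy.
  by exists x.
Qed.

Lemma G1 (K : fieldType) (E : vectType K) (F D : {vspace E}) (y : E) :
  y \in D -> y \notin F -> (F <= D)%VS -> \dim D = (\dim F).+1 -> D = (F + <[y]>)%VS.
Proof.
move=> hyD hyF hFD hd; apply/eqP; rewrite eq_sym eqEdim subv_add hFD -memvE hyD /= hd.
have := dimv_leqif_sup (addvSl F <[y]>).
move/ltn_leqif => ->; rewrite subv_add subvv /= -memvE hyF //.
Qed.
From mathcomp Require Import zify.

Theorem mainTheorem8 (R : realType) (K : fieldType) (abs : K -> R)
    (habs : nonarch_abs abs) (hnt : nontrivial_abs abs)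
    (hcomp : complete_abs abs) (hnsc : ~ spherically_complete abs)
    (E : vectType K) (norm : E -> R) (hnorm : nonarch_norm abs norm)
    (n : nat) (hdim : \dim (fullv : {vspace E}) = n)
    (hyp : forall F : {vspace E}, (\dim F + 2)%N = n -> quot_dual_dim norm F 1) :
  forall F1 F2 : {vspace E}, \dim F1 = n.-1 -> \dim F2 = n.-1 ->
    isometric_subspaces norm F1 F2.
Proof.
move=> F1 F2 h1 h2.
have [<-|neq] := eqVneq F1 F2; first exact: iso_refl.
set F := (F1 :&: F2)%VS.
have hsc := dimv_sum_cap F1 F2.
have hle := dimvS (subvf (F1 + F2)); rewrite hdim in hle.
have hlt : (\dim F1 < \dim (F1 + F2))%N.
  rewrite (ltn_leqif (dimv_leqif_sup (addvSl F1 F2))) subv_add subvv /=.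
  apply/negP => h21; move/negP: neq; apply; by rewrite eq_sym eqEdim h21 h1 h2 /= leqnn.
have hF : (\dim F + 2)%N = n by move: hsc hle hlt; rewrite h1 h2 -/F -!subn1; lia.
have hD : forall D : {vspace E}, (F <= D)%VS -> \dim D = n.-1 -> \dim D = (\dim F).+1.
  by move=> D _ ->; lia.
have [s [hso hsz hmax]] := hyp F hF.
case: s hso hsz hmax => [|s0 [|? ?]] //= hso _ hmax.
have hs0 : s0 \notin F by case: hso => /(_ 0%N) h _ _; apply: h.
have claim : forall D : {vspace E}, (F <= D)%VS -> \dim D = n.-1 ->
    isometric_subspaces norm (F + <[s0]>)%VS D /\ isometric_subspaces norm D (F + <[s0]>)%VS.
  move=> D hFD hdD; have hdD' := hD D hFD hdD.
  have : ~~ (D <= F)%VS.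
    by apply/negP => /dimvS; rewrite hdD' ltnn.
  case/subvPn => x hxD hxF.
  have [hxs|hxs] := boolP (x - s0 \in F).
    have hs0D : s0 \in D.
      have -> : s0 = x - (x - s0) by rewrite opprB addrC subrK.
      by apply: rpredB => //; move/subvP: hFD; apply.
    rewrite (@G1 _ _ F D s0 hs0D hs0 hFD hdD'); split; exact: iso_refl.
  have hno : ~ quot_orthogonal norm F [:: s0; x].
    have := hmax x hxF; rewrite /=; apply => -[|//] _; exact: hxs.
  have [d hd hlt'] := @lemK _ _ _ habs _ _ hnorm _ _ _ hs0 hxF hxs hno.
  have hdinD : d \in D.
    have : (F + <[x]> <= D)%VS by rewrite subv_add hFD -memvE hxD.
    by move/subvP; apply.
  have hdF : d \notin F.
    by apply/negP => hdF; move: (hlt' d hdF); rewrite ltxx.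
  rewrite (@G1 _ _ F D d hdinD hdF hFD hdD'); split; first exact: (@iso_line _ _ _ habs _ _ hnorm _ _ _ hlt').
  exact: (@iso_line _ _ _ habs _ _ hnorm _ _ _ (@near_sym _ _ _ habs _ _ hnorm _ _ _ hlt')).
have [_ c1] := claim F1 (capvSl F1 F2) h1.
have [c2 _] := claim F2 (capvSr F1 F2) h2.
exact: iso_trans c1 c2.
Qed.
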